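(* Let $k\ge 0$ and let $G$ be a $B_k$-EPG graph on $n$ vertices with clique number $\omega(G)$. Then $G$ has at most $(k+1)(\omega(G)-1)\,n$ edges.
   Context: A graph $G$ is a $B_k$-EPG graph if each vertex $u$ can be assigned a path $P_u$ in the planar orthogonal grid with at most $k$ bends (turns) such that $uv\in E(G)$ if and only if $P_u$ and $P_v$ share at least one grid edge. $\omega(G)$ denotes the maximum size of a clique of $G$. *)

(* Defs.v *)
From mathcomp Require Import all_boot all_order all_algebra.
Set Implicit Arguments. Unset Strict Implicit. Unset Printing Implicit Defensive.
Import Order.TTheory GRing.Theory Num.Theory.

Definition point := (int * int)%type.

Definition dir (a b : point) : point := ((b.1 - a.1)%R, (b.2 - a.2)%R).

Definition grid_adj (a b : point) : bool :=
  dir a b \in [:: (1%R, 0%R); ((-1)%R, 0%R); (0%R, 1%R); (0%R, (-1)%R)].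

Definition steps (p : seq point) : seq (point * point) := zip p (behead p).

Definition grid_path (p : seq point) : bool :=
  [&& size p > 0, uniq p & all (fun ab => grid_adj ab.1 ab.2) (steps p)].

Definition bends (p : seq point) : nat :=
  let ds := map (fun ab => dir ab.1 ab.2) (steps p) in
  count (fun dd => dd.1 != dd.2) (zip ds (behead ds)).

Definition share_edge (p q : seq point) : bool :=
  has (fun ab => (ab \in steps q) || ((ab.2, ab.1) \in steps q)) (steps p).

Definition simple_graph (T : finType) (e : rel T) : Prop :=
  symmetric e /\ irreflexive e.

Definition Bk_EPG (k : nat) (T : finType) (e : rel T) : Prop :=
  exists P : T -> seq point,
    (forall u, grid_path (P u) /\ bends (P u) <= k) /\
    (forall u v, u != v -> (e u v <-> share_edge (P u) (P v))).

Definition is_clique (T : finType) (e : rel T) (A : {set T}) : bool :=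
  [forall x in A, forall y in A, (x != y) ==> e x y].

Definition clique_number (T : finType) (e : rel T) : nat :=
  \max_(A : {set T} | is_clique e A) #|A|.

Definition edge_set (T : finType) (e : rel T) : {set {set T}} :=
  [set A : {set T} | [exists x, exists y, e x y && (A == [set x; y])]].

Definition num_edges (T : finType) (e : rel T) : nat := #|edge_set e|.

(* Main.v *)
Require Import Defs.
From mathcomp Require Import all_boot all_order all_algebra zify.
Set Implicit Arguments. Unset Strict Implicit. Unset Printing Implicit Defensive.
Import Order.TTheory GRing.Theory Num.Theory.

Section H.
Local Open Scope ring_scope.
Definition cont (q : seq point) (ab : point * point) : bool :=
  (ab \in steps q) || ((ab.2, ab.1) \in steps q).
Definition ssum (a : point) : int := a.1 + a.2.
Definition lo (ab : point*point) : point := if ssum ab.1 < ssum ab.2 then ab.1 else ab.2.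
Definition hi (ab : point*point) : point := if ssum ab.1 < ssum ab.2 then ab.2 else ab.1.
Definition prevE (ab : point*point) : point*point :=
  ((2*(lo ab).1 - (hi ab).1, 2*(lo ab).2 - (hi ab).2), lo ab).
Definition mu (ab : point*point) : int := ssum (lo ab).
Definition Fs p ab := ~~ cont p (prevE ab).
Definition pos (d : point) := (d == (1, 0)) || (d == (0, 1)).

Lemma adjE (a b : point) : grid_adj a b ->
  [\/ b.1 = a.1 + 1 /\ b.2 = a.2, b.1 = a.1 - 1 /\ b.2 = a.2,
      b.1 = a.1 /\ b.2 = a.2 + 1 | b.1 = a.1 /\ b.2 = a.2 - 1].
Proof.
case: a b => [a1 a2] [b1 b2]; rewrite /grid_adj /dir /= !inE.
case/or4P => /eqP [] h1 h2; [apply: Or41|apply: Or42|apply: Or43|apply: Or44]; lia.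
Qed.

Lemma posE (a b : point) : grid_adj a b ->
  pos (dir a b) = (ssum a < ssum b).
Proof.
case: a b => [a1 a2] [b1 b2] /adjE; rewrite /pos /dir /ssum /= !xpair_eqE.
case=> -[/= h1 h2]; lia.
Qed.


Lemma lo_lt (a b : point) : ssum a < ssum b -> lo (a, b) = a /\ hi (a, b) = b.
Proof. by rewrite /lo /hi /= => ->. Qed.
Lemma lo_gt (a b : point) : ssum b < ssum a -> lo (a, b) = b /\ hi (a, b) = a.
Proof. by rewrite /lo /hi /= => h; rewrite ltNge (ltW h). Qed.

Lemma prev_rev (a b : point) : grid_adj a b -> prevE (b, a) = prevE (a, b).
Proof.
move=> /adjE H.
have [h|h] : ssum a < ssum b \/ ssum b < ssum a.
  by case: a b H => [a1 a2] [b1 b2]; rewrite /ssum /=; case=> -[/= h1 h2]; lia.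
- by rewrite /prevE; case: (lo_lt h) => -> ->; case: (lo_gt h) => -> ->.
- by rewrite /prevE; case: (lo_lt h) => -> ->; case: (lo_gt h) => -> ->.
Qed.

Lemma mu_rev (a b : point) : grid_adj a b -> mu (b, a) = mu (a, b).
Proof.
move=> /adjE H.
have [h|h] : ssum a < ssum b \/ ssum b < ssum a.
  by case: a b H => [a1 a2] [b1 b2]; rewrite /ssum /=; case=> -[/= h1 h2]; lia.
- by rewrite /mu; case: (lo_lt h) => -> _; case: (lo_gt h) => -> _.
- by rewrite /mu; case: (lo_lt h) => -> _; case: (lo_gt h) => -> _.
Qed.

Lemma mu_prev (a b : point) : grid_adj a b -> mu (prevE (a, b)) < mu (a, b).
Proof.
move=> /adjE H.
have [h|h] : ssum b = ssum a + 1 \/ ssum b = ssum a - 1.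
  by case: a b H => [a1 a2] [b1 b2]; rewrite /ssum /=; case=> -[/= h1 h2]; lia.
- have h' : ssum a < ssum b by rewrite h; lia.
  rewrite /prevE /mu; case: (lo_lt h') => -> ->.
  have h2 : ssum (2 * a.1 - b.1, 2 * a.2 - b.2) < ssum a.
    by move: h; case: a b {H h'} => [a1 a2] [b1 b2]; rewrite /ssum /=; lia.
  by case: (lo_lt h2) => -> _.
- have h' : ssum b < ssum a by rewrite h; lia.
  rewrite /prevE /mu; case: (lo_gt h') => -> ->.
  have h2 : ssum (2 * b.1 - a.1, 2 * b.2 - a.2) < ssum b.
    by move: h; case: a b {H h'} => [a1 a2] [b1 b2]; rewrite /ssum /=; lia.
  by case: (lo_lt h2) => -> _.
Qed.

Lemma local_pos (a b c : point) : grid_adj a b -> dir a b = dir b c ->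
  pos (dir a b) -> prevE (b, c) = (a, b).
Proof.
move=> ab; rewrite (posE ab) => e h.
have h' : ssum b < ssum c.
  by move: e h; case: a b c {ab} => [a1 a2] [b1 b2] [c1 c2]; rewrite /dir /ssum /= => -[] ? ?; lia.
rewrite /prevE; case: (lo_lt h') => -> ->.
by move: e; case: a b c {ab h h'} => [a1 a2] [b1 b2] [c1 c2]; rewrite /dir /= => -[] ? ?; congr ((_,_),(_,_)); lia.
Qed.

Lemma local_neg (a b c : point) : grid_adj a b -> dir a b = dir b c ->
  ~~ pos (dir a b) -> prevE (a, b) = (c, b).
Proof.
move=> ab; rewrite (posE ab) -leNgt => e h.
have h' : ssum b < ssum a.
  by move: (adjE ab) h; case: a b c {ab e} => [a1 a2] [b1 b2] [c1 c2]; rewrite /ssum /=; case=> -[/= h1 h2]; lia.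
rewrite /prevE; case: (lo_gt h') => -> ->.
by move: e; case: a b c {ab h h'} => [a1 a2] [b1 b2] [c1 c2]; rewrite /dir /= => -[] ? ?; congr ((_,_),(_,_)); lia.
Qed.
End H.



Definition adjs (p : seq point) := all (fun ab => grid_adj ab.1 ab.2) (steps p).

Lemma count_F q p : {subset steps p <= steps q} -> adjs p ->
  count (Fs q) (steps p) + (if p is a :: b :: _ then pos (dir a b) && ~~ Fs q (a, b) else false)
  <= (bends p).+1.
Proof.
elim: p => [|a p IH] //; case: p IH => [|b p] IH //.
case: p IH => [|c p] IH sub ad.
  by rewrite /= addn0; case: (Fs q (a, b)); case: (pos _).
have sub' : {subset steps [:: b, c & p] <= steps q}.
  by move=> x hx; apply: sub; rewrite /steps /= inE; apply/orP; right.
move: ad; rewrite /adjs /= => /and3P [ab bc rest].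
have ad' : adjs [:: b, c & p] by rewrite /adjs /= bc rest.
have := IH sub' ad'.
rewrite /bends /= => {}IH.
have abq : (a, b) \in steps q by apply: sub; rewrite /steps /= inE eqxx.
have bcq : (b, c) \in steps q by apply: sub; rewrite /steps /= !inE eqxx orbT.
case: eqP => e /=.
- case hp: (pos (dir a b)).
  + have : Fs q (b, c) = false.
      by rewrite /Fs (local_pos ab e hp) /cont abq.
    move=> hF; move: IH; rewrite -e hp hF /=.
    case: (Fs q (a, b)); lia.
  + have : Fs q (a, b) = false.
      by rewrite /Fs (local_neg ab e (negbT hp)) /cont /= bcq orbT.
    move=> hF; move: IH; rewrite hF /=; case: (pos _ && _); lia.
- move: IH; case: (pos (dir a b)); case: (Fs q (a, b)); case: (pos _ && _); lia.
Qed.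

Lemma count_F' q : adjs q -> count (Fs q) (steps q) <= (bends q).+1.
Proof. move=> ad; apply: leq_trans (count_F (fun x h => h) ad); exact: leq_addr. Qed.



Lemma exmin (X : eqType) (f : X -> int) (s : seq X) x0 : x0 \in s ->
  exists2 x, x \in s & forall y, y \in s -> (f x <= f y)%R.
Proof.
elim: s x0 => [|a s IH] x0 //.
case: (boolP (s == [::])) => [/eqP -> _|ne _].
  by exists a => [|y]; rewrite ?inE // => /eqP ->.
case: s ne IH => [//|b s] _ IH.
have [x xs xm] := IH b (mem_head _ _).
case: (leP (f a) (f x)) => h.
- exists a; first exact: mem_head.
  move=> y; rewrite in_cons => /orP [/eqP -> //|/xm]; exact: le_trans.
- exists x; first by rewrite in_cons xs orbT.
  move=> y; rewrite in_cons => /orP [/eqP ->|/xm //]; exact: ltW.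
Qed.

Lemma cont_rev q a b : cont q (b, a) = cont q (a, b).
Proof. by rewrite /cont /= orbC. Qed.

Lemma steps_cont p x : x \in steps p -> cont p x.
Proof. by rewrite /cont => ->. Qed.

Lemma share_cont p q x : cont p x -> cont q x -> share_edge p q.
Proof.
case: x => a b; rewrite {1}/cont /= => /orP [h|h] hq; apply/hasP.
- by exists (a, b).
- by exists (b, a) => //; rewrite /= -/(cont q (b, a)) cont_rev.
Qed.

Lemma adj_of p x : adjs p -> x \in steps p -> grid_adj x.1 x.2.
Proof. by move=> /allP h /h. Qed.

Lemma charge p q : adjs p -> adjs q -> share_edge p q ->
  (exists2 y, y \in steps p & Fs p y && cont q y) \/
  (exists2 y, y \in steps q & Fs q y && cont p y).
Proof.
move=> adp adq /hasP [x0 x0p x0q].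
have x0C : x0 \in [seq x <- steps p | cont q x] by rewrite mem_filter x0p andbT; exact: x0q.
have [[a b] abC abm] := exmin mu x0C.
move: (abC); rewrite mem_filter => /andP [abq abp].
have adab := adj_of adp abp.
case hc: (cont p (prevE (a, b))).
- right.
  have nq : ~~ cont q (prevE (a, b)).
    apply/negP => cq.
    case E: (prevE (a, b)) hc cq => [c d] hc cq.
    have := mu_prev adab; rewrite E.
    move: hc; rewrite /cont /= => /orP [h|h].
    + have : (c, d) \in [seq x <- steps p | cont q x] by rewrite mem_filter cq h.
      move=> /abm; rewrite -/(mu (a, b)); by move=> h1 h2; have := lt_le_trans h2 h1; rewrite ltxx.
    + have : (d, c) \in [seq x <- steps p | cont q x] by rewrite mem_filter cont_rev cq h.
      move=> /abm; rewrite (mu_rev (adj_of adp h)) /=; by move=> h1 h2; have := lt_le_trans h2 h1; rewrite ltxx.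
  move: abq; rewrite /cont /= => /orP [h|h].
  + exists (a, b) => //; rewrite /Fs nq /=; exact: steps_cont.
  + exists (b, a) => //; by rewrite /Fs prev_rev // nq /= abp orbT.
- left; exists (a, b) => //; by rewrite /Fs hc.
Qed.



Lemma card_bigcup_seq (I : eqType) (X : finType) (r : seq I) (Q : pred I) (F : I -> {set X}) :
  #|\bigcup_(i <- r | Q i) F i| <= \sum_(i <- r | Q i) #|F i|.
Proof.
elim: r => [|i r IH]; first by rewrite !big_nil cards0.
rewrite !big_cons; case: (Q i) => //.
apply: leq_trans (leq_card_setU _ _) _; exact: leq_add.
Qed.

Lemma mem_bigcup_seq (I : eqType) (X : finType) (r : seq I) (Q : pred I) (F : I -> {set X}) i x :
  i \in r -> Q i -> x \in F i -> x \in \bigcup_(j <- r | Q j) F j.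
Proof.
elim: r => [|j r IH] //; rewrite in_cons big_cons => /orP [/eqP <-|ir] qi xi.
  by rewrite qi in_setU xi.
by case: (Q j); rewrite ?in_setU IH ?orbT.
Qed.

Lemma sum_const_seq (I : eqType) (r : seq I) (Q : pred I) c :
  \sum_(i <- r | Q i) c = count Q r * c.
Proof. by rewrite big_const_seq iter_addn_0 mulnC. Qed.

Theorem lemma12 (k : nat) (T : finType) (e : rel T) :
  simple_graph e -> Bk_EPG k e ->
  num_edges e <= (k + 1) * (clique_number e - 1) * #|T|.
Proof.
move=> [esym eirr] [P [hP hiff]].
set om := clique_number e.
have adP : forall u, adjs (P u) by move=> u; case: (hP u) => /and3P [].
pose N w y := [set z | (z != w) && cont (P z) y].
have Nb : forall w y, y \in steps (P w) -> #|N w y| <= om - 1.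
  move=> w y yw.
  have wN : w \notin N w y by rewrite inE eqxx.
  have cl : is_clique e (w |: N w y).
    apply/forallP => x; apply/implyP => hx; apply/forallP => x'; apply/implyP => hx'.
    apply/implyP => ne; apply/(hiff _ _ ne).
    have cx : forall z, z \in w |: N w y -> cont (P z) y.
      move=> z; rewrite !inE => /orP [/eqP ->|/andP [] //]; exact: steps_cont.
    exact: (share_cont (cx _ hx) (cx _ hx')).
  have := @leq_bigmax_cond _ (is_clique e) (fun A : {set T} => #|A|) _ cl.
  rewrite -/(clique_number e) -/om cardsU1 wN /=; lia.
pose S := \bigcup_(w : T) \bigcup_(y <- steps (P w) | Fs (P w) y) [set [set w; z] | z in N w y].
have sub : edge_set e \subset S.
  apply/subsetP => A; rewrite inE => /existsP [x /existsP [y /andP [exy /eqP ->]]].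
  have nxy : x != y by apply/negP => /eqP h; move: exy; rewrite h eirr.
  have sh := (hiff _ _ nxy).1 exy.
  case: (charge (adP x) (adP y) sh) => -[z zs /andP [Fz cz]].
  - apply/bigcupP; exists x => //; apply: (mem_bigcup_seq zs Fz).
    apply/imsetP; exists y => //; rewrite inE eq_sym nxy; exact: cz.
  - apply/bigcupP; exists y => //; apply: (mem_bigcup_seq zs Fz).
    apply/imsetP; exists x; first by rewrite inE nxy; exact: cz.
    by rewrite setUC.
apply: leq_trans (subset_leq_card sub) _.
apply: leq_trans (@card_bigcup_seq _ _ (index_enum T) (fun _ => true) _) _.
apply: leq_trans (_ : _ <= \sum_(w <- index_enum T | true) \sum_(y <- steps (P w) | Fs (P w) y) #|N w y|) _.
  apply: leq_sum => w _; apply: leq_trans (card_bigcup_seq _ _ _) _.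
  apply: leq_sum => y _; exact: leq_imset_card.
have hw : forall w : T, \sum_(y <- steps (P w) | Fs (P w) y) #|N w y| <= (k + 1) * (om - 1).
  move=> w.
  apply: leq_trans (_ : \sum_(y <- steps (P w) | Fs (P w) y) (om - 1) <= _).
    rewrite big_seq_cond [X in _ <= X]big_seq_cond; apply: leq_sum => y /andP [yw _]; exact: Nb.
  rewrite sum_const_seq leq_mul2r; apply/orP; right.
  apply: leq_trans (count_F' (adP w)) _; case: (hP w) => _; lia.
apply: leq_trans (_ : _ <= \sum_(w : T) ((k + 1) * (om - 1))) _.
  by apply: leq_sum => w _; exact: hw.
by rewrite sum_nat_const mulnC.
Qed.
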